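(* Let $G=(V,E)$ be an undirected graph with $n$ nodes and $m$ edges. Let $H$ be the set of nodes with degree larger than $m^{1/3}$, and $L=V\setminus H$. Orient every edge $\{u,v\}$ from $u$ to $v$ if $\deg(u)\le \deg(v)$ (breaking ties arbitrarily). Let $P$ be the number of directed $2$-paths $u\to v\to w$ with $u\in L$, $v\in H$, $w\in H$ (i.e., the edge $\{u,v\}$ is oriented from $u$ to $v$ and the edge $\{v,w\}$ is oriented from $v$ to $w$). If $P>100\,m^{4/3}\log^2 n$, then $G$ contains at least $P/(100\log^2 n)$ $4$-cycles.
   Context: Graphs are simple, unweighted and undirected; $\deg(v)$ denotes the degree of node $v$ in $G$. A $2$-path is a path $u,v,w$ on three distinct nodes with edges $\{u,v\},\{v,w\}$; $v$ is its center. A $4$-cycle is a cycle on four distinct nodes. $\log$ denotes the logarithm (base 2). *)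

(* Defs.v *)
From mathcomp Require Import all_boot.
From Stdlib Require Import Reals.
Set Implicit Arguments. Unset Strict Implicit. Unset Printing Implicit Defensive.

Section Graph.
Variable T : finType.
Variable e : rel T.

Definition simple_graph := symmetric e /\ irreflexive e.

Definition deg (v : T) : nat := #|[set w | e v w]|.

Definition edges : {set {set T}} :=
  [set E | [exists u, exists v, e u v && (E == [set u; v])]].

Definition nedges : nat := #|edges|.

(* H = nodes of degree > m^{1/3}, i.e. deg^3 > m ; L = complement *)
Definition high (v : T) : bool := nedges < deg v ^ 3.

Definition degree_orientation (o : rel T) : Prop :=
  (forall u v, o u v -> e u v) /\
  (forall u v, e u v -> (o u v (+) o v u)) /\
  (forall u v, o u v -> deg u <= deg v).

Definition P_count (o : rel T) : nat :=
  #|[set t : T * T * T |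
      let: (u, v, w) := t in
      [&& ~~ high u, high v, high w, o u v & o v w]]|.

Definition cycle4_edges (a b c d : T) : {set {set T}} :=
  [set [set a; b]; [set b; c]; [set c; d]; [set d; a]].

Definition cycles4 : {set {set {set T}}} :=
  [set C | [exists a, exists b, exists c, exists d,
     [&& uniq [:: a; b; c; d], e a b, e b c, e c d, e d a &
         C == cycle4_edges a b c d]]].

Definition ncycles4 : nat := #|cycles4|.
End Graph.

Definition log2 (x : R) : R := (ln x / ln 2)%R.

(* Main.v *)
Require Import Defs.
From mathcomp Require Import all_boot.
From Stdlib Require Import Reals.
From mathcomp Require Import ssreflect ssrfun ssrbool eqtype ssrnat seq fintype bigop finset.
Set Implicit Arguments. Unset Strict Implicit. Unset Printing Implicit Defensive.

Lemma set2_inj (T : finType) (x y p q : T) :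
  [set x; y] = [set p; q] -> (x = p /\ y = q) \/ (x = q /\ y = p).
Proof.
move=> E.
have hx : x \in [set p; q] by rewrite -E set21.
have hy : y \in [set p; q] by rewrite -E set22.
have hp : p \in [set x; y] by rewrite E set21.
have hq : q \in [set x; y] by rewrite E set22.
move: hx hy hp hq; rewrite !inE.
move=> /orP[]/eqP hx /orP[]/eqP hy /orP[]/eqP hp /orP[]/eqP hq;
  first [left; split; congruence | right; split; congruence].
Qed.

Lemma mem_c4 (T : finType) (x y a b c d : T) :
  [set x; y] \in cycle4_edges a b c d ->
  (x = a /\ y = b) \/ (x = b /\ y = a) \/
  (x = b /\ y = c) \/ (x = c /\ y = b) \/
  (x = c /\ y = d) \/ (x = d /\ y = c) \/
  (x = d /\ y = a) \/ (x = a /\ y = d).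
Proof.
rewrite /cycle4_edges !inE => /orP[/orP[/orP[|]|]|] /eqP/set2_inj;
  tauto.
Qed.

Lemma uniq4 (T : eqType) (a b c d : T) : uniq [:: a; b; c; d] ->
  a <> b /\ a <> c /\ a <> d /\ b <> c /\ b <> d /\ c <> d.
Proof.
move=> H; repeat split; move=> E; subst; move: H; rewrite /= !inE ?eqxx /= ?orbT ?andbF //.
Qed.

Lemma D8 (T : finType) (a b c d a' b' c' d' : T) :
  uniq [:: a; b; c; d] -> uniq [:: a'; b'; c'; d'] ->
  cycle4_edges a' b' c' d' = cycle4_edges a b c d ->
  (a', b', c', d') \in [:: (a, b, c, d); (b, c, d, a); (c, d, a, b); (d, a, b, c);
                         (a, d, c, b); (d, c, b, a); (c, b, a, d); (b, a, d, c)].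
Proof.
move=> /uniq4[u1 [u2 [u3 [u4 [u5 u6]]]]] /uniq4[v1 [v2 [v3 [v4 [v5 v6]]]]] E.
have H1 : [set a'; b'] \in cycle4_edges a b c d by rewrite -E /cycle4_edges !inE eqxx.
have H2 : [set b'; c'] \in cycle4_edges a b c d by rewrite -E /cycle4_edges !inE eqxx !orbT.
have H3 : [set c'; d'] \in cycle4_edges a b c d by rewrite -E /cycle4_edges !inE eqxx !orbT.
move/mem_c4: H1 => H1; move/mem_c4: H2 => H2; move/mem_c4: H3 => H3.
decompose [or and] H1; clear H1; subst; try congruence;
decompose [or and] H2; clear H2; subst; try congruence;
decompose [or and] H3; clear H3; subst; try congruence;
rewrite !inE eqxx ?orbT //.
Qed.
Lemma card_fiber (A B : finType) (S : {set A}) (C : {set B}) (f : A -> B) k :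
  (forall x, x \in S -> f x \in C) ->
  (forall y, y \in C -> #|[set x in S | f x == y]| <= k) ->
  #|S| <= k * #|C|.
Proof.
move=> hS hC.
rewrite -sum1_card (partition_big f (mem C)) //=.
rewrite mulnC -sum_nat_const; apply: leq_sum => y yC.
rewrite sum1dep_card.
apply: leq_trans (hC y yC).
by apply: subset_leq_card; apply/subsetP => x; rewrite !inE.
Qed.

Lemma sum2_card (T : finType) (F : T -> T -> bool) :
  \sum_v \sum_w (F v w : nat) = #|[set p : T * T | F p.1 p.2]|.
Proof.
rewrite pair_bigA /= -sum1dep_card [RHS]big_mkcond /=.
by apply: eq_bigr => p _; case: (F _ _).
Qed.

Lemma sum4_card (T : finType) (F : T -> T -> T -> T -> bool) :
  \sum_a \sum_b \sum_c \sum_d (F a b c d : nat) =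
  #|[set p : T * T * T * T | F p.1.1.1 p.1.1.2 p.1.2 p.2]|.
Proof.
rewrite pair_bigA /=.
rewrite (eq_bigr (fun p => \sum_(q : T * T) (F p.1 p.2 q.1 q.2 : nat))); last first.
  by move=> p _; rewrite pair_bigA.
rewrite pair_bigA /= -sum1dep_card [RHS]big_mkcond /=.
pose g (x : T * T * T * T) : (T * T) * (T * T) := (x.1.1, (x.1.2, x.2)).
pose h (y : (T * T) * (T * T)) : T * T * T * T := (y.1, y.2.1, y.2.2).
have gK : cancel g h by case=> [[[a b] c] d].
have hK : cancel h g by case=> [[a b] [c d]].
rewrite (reindex g) /=; last by exists h => ? _.
by apply: eq_bigr => [[[[a b] c] d]] _ /=; case: (F _ _ _ _).
Qed.

Lemma handshake (T : finType) (e : rel T) :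
  simple_graph e -> \sum_v \sum_w (e v w : nat) <= 2 * nedges e.
Proof.
move=> [esym eirr].
rewrite sum2_card /nedges.
apply: (@card_fiber _ _ _ _ (fun p => [set p.1; p.2])).
  move=> p; rewrite !inE => epq; apply/existsP; exists p.1; apply/existsP; exists p.2.
  by rewrite epq eqxx.
move=> y; rewrite inE => /existsP[a /existsP[b /andP[eab /eqP ->]]].
apply: leq_trans (_ : #|[set (a, b); (b, a)]| <= 2); last by rewrite cards2; case: (_ != _).
apply: subset_leq_card; apply/subsetP => [[x1 x2]]; rewrite !inE /= => /andP[_ /eqP/set2_inj].
by case=> [[-> ->]|[-> ->]]; rewrite eqxx ?orbT.
Qed.

Definition c4pred (T : finType) (e : rel T) (a b c d : T) : bool :=
  [&& uniq [:: a; b; c; d], e a b, e b c, e c d & e d a].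

Lemma c4_count (T : finType) (e : rel T) :
  \sum_a \sum_b \sum_c \sum_d (c4pred e a b c d : nat) <= 8 * ncycles4 e.
Proof.
rewrite sum4_card /ncycles4.
apply: (@card_fiber _ _ _ _ (fun p => cycle4_edges p.1.1.1 p.1.1.2 p.1.2 p.2)).
  move=> [[[a b] c] d]; rewrite !inE /= => hp.
  apply/existsP; exists a; apply/existsP; exists b; apply/existsP; exists c; apply/existsP; exists d.
  move: hp; rewrite /c4pred => /and5P[h1 h2 h3 h4 h5].
  by rewrite -[X in X && _]/(uniq [:: a; b; c; d]) h1 h2 h3 h4 h5 eqxx.
move=> y; rewrite inE => /existsP[a /existsP[b /existsP[c /existsP[d]]]].
move=> /andP[ua /and5P[_ _ _ _ /eqP ->]].
pose s := [:: (a, b, c, d); (b, c, d, a); (c, d, a, b); (d, a, b, c);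
              (a, d, c, b); (d, c, b, a); (c, b, a, d); (b, a, d, c)].
apply: leq_trans (_ : #|s| <= 8); last exact: card_size.
apply: subset_leq_card; apply/subsetP => [[[[a' b'] c'] d']]; rewrite inE.
move=> /andP[hp /eqP E]; move: hp; rewrite inE /c4pred => /and5P[ua' _ _ _ _].
exact: D8 ua ua' E.
Qed.

From mathcomp Require Import zify.
Lemma two_ab (a b : nat) : 2 * (a * b) <= a ^ 2 + b ^ 2.
Proof.
case: (leqP a b) => h.
  have -> : b = a + (b - a) by lia.
  move: (b - a) => k; rewrite !expnS !expn0; nia.
have -> : a = b + (a - b) by lia.
move: (a - b) => k; rewrite !expnS !expn0; nia.
Qed.

Lemma cauchy (I : finType) (P : pred I) (f : I -> nat) :
  (\sum_(i | P i) f i) ^ 2 <= #|[set i | P i]| * \sum_(i | P i) f i ^ 2.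
Proof.
rewrite -(leq_pmul2l (isT : 0 < 2)).
have -> : (\sum_(i | P i) f i) ^ 2 = \sum_(i | P i) \sum_(j | P j) f i * f j.
  rewrite expnS expn1 big_distrl /=; apply: eq_bigr => i _; by rewrite big_distrr.
rewrite big_distrr /=.
apply: leq_trans (_ : \sum_(i | P i) \sum_(j | P j) (f i ^ 2 + f j ^ 2) <= _).
  apply: leq_sum => i _; rewrite big_distrr /=; apply: leq_sum => j _; exact: two_ab.
rewrite (eq_bigr (fun i => #|[set i | P i]| * f i ^ 2 + \sum_(j | P j) f j ^ 2)); last first.
  by move=> i _; rewrite big_split /= sum_nat_cond_const mulnC.
rewrite big_split /= -big_distrr /= sum_nat_cond_const.
lia.
Qed.

Section KST.
Variable T : finType.
Variable o : rel T.
Variable V : {set T}.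

Definition outd v := \sum_(w in V) (o v w : nat).
Definition Esum := \sum_(v in V) outd v.
Definition qc w w' := \sum_(v in V) ((o v w && o v w') : nat).
Definition Ysum := \sum_(w in V) \sum_(w' in V | w' != w) qc w w'.
Definition Zsum := \sum_(w in V) \sum_(w' in V | w' != w) \sum_(v in V) \sum_(v' in V | v' != v)
   (((o v w && o v w') && (o v' w && o v' w')) : nat).

Lemma sqr_sum (I : finType) (P : pred I) (f : I -> nat) :
  (\sum_(i | P i) f i) ^ 2 = \sum_(i | P i) \sum_(j | P j) f i * f j.
Proof. rewrite expnS expn1 big_distrl /=; apply: eq_bigr => i _; by rewrite big_distrr. Qed.

Lemma cardV : #|[set i | i \in V]| = #|V|.
Proof. by apply: eq_card => x; rewrite inE. Qed.

Lemma kst1 : Esum ^ 2 <= #|V| * (Ysum + Esum).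
Proof.
have := cauchy (mem V) outd; rewrite cardV => h; apply: leq_trans h _.
rewrite leq_mul2l; apply/orP; right; apply: eq_leq.
rewrite (eq_bigr (fun v => \sum_(w in V) \sum_(w' in V) ((o v w && o v w') : nat))); last first.
  by move=> v _; rewrite /outd sqr_sum; apply: eq_bigr => w _; apply: eq_bigr => w' _; rewrite mulnb.
rewrite exchange_big /=.
rewrite (eq_bigr (fun w => \sum_(w' in V) qc w w')); last first.
  by move=> w _; rewrite exchange_big.
rewrite (eq_bigr (fun w => qc w w + \sum_(w' in V | w' != w) qc w w')); last first.
  by move=> w wV; rewrite (bigD1 w wV).
rewrite big_split /= addnC; congr (_ + _).
rewrite /Esum /outd /qc exchange_big /=; apply: eq_bigr => w _; apply: eq_bigr => v _.
by rewrite andbb.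
Qed.

Lemma kst2 : Ysum ^ 2 <= #|V| ^ 2 * (Zsum + Ysum).
Proof.
have := cauchy (mem V) (fun w => \sum_(w' in V | w' != w) qc w w'); rewrite cardV => h.
apply: leq_trans h _.
rewrite expnS expn1 -mulnA leq_mul2l; apply/orP; right.
rewrite /Zsum /Ysum -big_split /= big_distrr /=; apply: leq_sum => w wV.
apply: leq_trans (cauchy _ _) _.
rewrite -big_split /=.
apply: leq_mul.
  by apply: subset_leq_card; apply/subsetP => x; rewrite inE => /andP[].
rewrite leq_eqVlt; apply/orP; left; apply/eqP; apply: eq_bigr => w' _.
rewrite /qc sqr_sum.
rewrite (eq_bigr (fun v => ((o v w && o v w') : nat) +
   \sum_(v' in V | v' != v) (((o v w && o v w') && (o v' w && o v' w')) : nat))); last first.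
  move=> v vV; rewrite (bigD1 v vV) /= mulnb andbb; congr (_ + _).
  by apply: eq_bigr => v' _; rewrite mulnb.
by rewrite big_split /= addnC.
Qed.

End KST.

Lemma sum_le_full (I : finType) (P : pred I) (F G : I -> nat) :
  (forall i, P i -> F i <= G i) -> \sum_(i | P i) F i <= \sum_i G i.
Proof. move=> h; rewrite big_mkcond; apply: leq_sum => i _; case: ifP => [/h|] //. Qed.


Lemma sum_lt_min (n d : nat) : \sum_(t < n) (t < d : nat) = minn n d.
Proof.
elim: n => [|n IH]; first by rewrite big_ord0 min0n.
rewrite big_ord_recr /= IH; case: (ltnP n d) => h /=; lia.
Qed.

Lemma cube_bound (K m : nat) : K * (m+1) <= 8 * m ^ 3 -> K <= 8 * m ^ 2.
Proof. rewrite !expnS expn0. nia. Qed.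

Lemma sum3_card (T : finType) (F : T -> T -> T -> bool) :
  \sum_a \sum_b \sum_c (F a b c : nat) =
  #|[set p : T * T * T | F p.1.1 p.1.2 p.2]|.
Proof.
rewrite pair_bigA /= pair_bigA /= -sum1dep_card [RHS]big_mkcond /=.
by apply: eq_bigr => [[[a b] c]] _ /=; case: (F _ _ _).
Qed.

Lemma powE (d k : nat) : Nat.pow d k = d ^ k.
Proof. elim: k => [|k IH] //=; by rewrite IH expnS multE. Qed.
Lemma highE (T : finType) (e : rel T) v : high e v = (nedges e < deg e v ^ 3).
Proof. by rewrite /high powE. Qed.

Section Graph2.
Variable T : finType.
Variable e : rel T.
Variable o : rel T.
Hypothesis sg : simple_graph e.
Hypothesis dor : degree_orientation e o.

Lemma o_e u v : o u v -> e u v.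
Proof. by case: dor => h _; apply: h. Qed.

Lemma e_sym u v : e u v = e v u.
Proof. by case: sg => h _; apply: h. Qed.

Lemma e_neq u v : e u v -> u != v.
Proof. by case: sg => _ h; apply: contraTneq => ->; rewrite h. Qed.

Lemma Z_le (V : {set T}) : Zsum o V <= 8 * ncycles4 e.
Proof.
apply: leq_trans (c4_count e).
apply: leq_trans (_ : \sum_w \sum_w' \sum_v \sum_v' (c4pred e v w v' w' : nat) <= _).
  apply: sum_le_full => w _; apply: sum_le_full => w' /andP[_ nw].
  apply: sum_le_full => v _; apply: sum_le_full => v' /andP[_ nv].
  case: (o v w) /idP => // /o_e h1; case: (o v w') /idP => // /o_e h2.
  case: (o v' w) /idP => // /o_e h3; case: (o v' w') /idP => //= /o_e h4.
  rewrite /c4pred h1 h4 (e_sym w v') h3 (e_sym w' v) h2 /= !inE !negb_or.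
  by rewrite (e_neq h1) (e_neq h2) (eq_sym w v') (e_neq h3) (e_neq h4) (eq_sym v v') nv (eq_sym w w') nw.
rewrite eq_leq // (eq_bigr (fun w => \sum_v \sum_w' \sum_v' (c4pred e v w v' w' : nat))); last first.
  by move=> w _; rewrite exchange_big.
rewrite exchange_big /=; apply: eq_bigr => v _; apply: eq_bigr => w _.
by rewrite exchange_big.
Qed.



Definition Vt t := [set v | high e v && (t < deg e v)].
Definition Hs := [set v | high e v].

Lemma deg_sum v : deg e v = \sum_w (e v w : nat).
Proof.
rewrite /deg -sum1dep_card [LHS]big_mkcond /=.
by apply: eq_bigr => w _; case: (e v w).
Qed.

Lemma deg_le_n v : deg e v <= #|T|.
Proof. exact: max_card. Qed.

Lemma sum_deg : \sum_v deg e v <= 2 * nedges e.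
Proof.
apply: leq_trans (handshake sg); apply: eq_leq; apply: eq_bigr => v _; exact: deg_sum.
Qed.

Lemma B_bound : \sum_(t < #|T|) #|Vt t| <= 2 * nedges e.
Proof.
apply: leq_trans sum_deg.
rewrite (eq_bigr (fun t : 'I_#|T| => \sum_v ((high e v && (t < deg e v)) : nat))); last first.
  move=> t _; rewrite /Vt -sum1dep_card [LHS]big_mkcond /=.
  by apply: eq_bigr => v _; case: (_ && _).
rewrite exchange_big /=; apply: leq_sum => v _.
apply: leq_trans (_ : \sum_(t < #|T|) (t < deg e v : nat) <= _).
  by apply: leq_sum => t _; case: (high e v).
by rewrite sum_lt_min geq_minr.
Qed.

Lemma Vt_le_H t : #|Vt t| <= #|Hs|.
Proof. by apply: subset_leq_card; apply/subsetP => v; rewrite !inE => /andP[]. Qed.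

Lemma H_bound : #|Hs| ^ 3 <= 8 * nedges e ^ 2.
Proof.
case: (posnP #|Hs|) => [->|hk]; first by rewrite exp0n.
case/card_gt0P: hk => x xH.
have xH' : high e x by move: xH; rewrite inE.
case: (@arg_minnP _ x (fun v => high e v) (deg e) xH') => v0 v0H v0min.
set k := #|Hs|; set m := nedges e; set d0 := deg e v0.
have h1 : k * d0 <= 2 * m.
  apply: leq_trans sum_deg.
  rewrite -sum_nat_const.
  apply: leq_trans (_ : \sum_(v in Hs) deg e v <= _).
    by apply: leq_sum => v; rewrite inE => vH; apply: v0min.
  by apply: sum_le_full.
have h2 : m < d0 ^ 3 by move: v0H; rewrite highE.
apply: cube_bound.
apply: leq_trans (_ : k ^ 3 * d0 ^ 3 <= _).
  by rewrite leq_mul2l addn1 h2 orbT.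
rewrite -expnMn.
apply: leq_trans (_ : (2 * m) ^ 3 <= _); first by rewrite leq_exp2r.
by rewrite expnMn.
Qed.

Lemma A_bound : P_count e o <= \sum_(t < #|T|) Esum o (Vt t).
Proof.
have -> : P_count e o = \sum_u \sum_v \sum_w
   ([&& ~~ high e u, high e v, high e w, o u v & o v w] : nat).
  rewrite sum3_card /P_count; apply: eq_card => [[[u v] w]]; by rewrite !inE.
have -> : \sum_(t < #|T|) Esum o (Vt t) = \sum_v \sum_w \sum_(t < #|T|)
   ([&& v \in Vt t, w \in Vt t & o v w] : nat).
  rewrite (eq_bigr (fun t : 'I_#|T| => \sum_v \sum_w ([&& v \in Vt t, w \in Vt t & o v w] : nat))); last first.
    move=> t _; rewrite /Esum /outd big_mkcond /=; apply: eq_bigr => v _.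
    case: (v \in Vt t) => /=; last by rewrite big1.
    rewrite big_mkcond /=; apply: eq_bigr => w _.
    by case: (w \in Vt t).
  rewrite exchange_big /=; apply: eq_bigr => v _; by rewrite exchange_big.
rewrite exchange_big /=; apply: leq_sum => v _.
rewrite exchange_big /=; apply: leq_sum => w _.
case: (boolP [&& high e v, high e w & o v w]) => [/and3P[hv hw hvw]|hn]; last first.
  rewrite big1 // => u _.
  case: (boolP [&& ~~ high e u, high e v, high e w, o u v & o v w]) => //.
  by case/and5P=> _ h1 h2 _ h3; rewrite h1 h2 h3 in hn.
apply: leq_trans (_ : \sum_u (e v u : nat) <= _).
  apply: leq_sum => u _.
  case: (boolP [&& ~~ high e u, high e v, high e w, o u v & o v w]) => //.
  by case/and5P=> _ _ _ /o_e h _; rewrite (e_sym v u) h.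
rewrite -deg_sum.
have -> : deg e v = minn #|T| (deg e v) by apply/esym/minn_idPr; apply: deg_le_n.
rewrite -sum_lt_min; apply: leq_sum => t _.
case: (boolP (t < deg e v)) => // htv.
have hdw : deg e v <= deg e w by case: dor => _ [_ h]; apply: h.
by rewrite /Vt !inE hv hw hvw htv (leq_trans htv hdw).
Qed.

End Graph2.

From Stdlib Require Import Lra.
Local Open Scope R_scope.

Lemma pow_le_inv (a b : R) (k : nat) : 0 <= a -> 0 <= b -> a ^ S k <= b ^ S k -> a <= b.
Proof.
intros ha hb h. destruct (Rle_lt_dec a b) as [|Hlt]; auto. exfalso.
assert (b ^ S k < a ^ S k).
{ induction k as [|k IH].
  - simpl; lra.
  - assert (h1 : b ^ S k <= a ^ S k) by (apply pow_incr; lra).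
    assert (h2 : 0 < a ^ S k) by (apply pow_lt; lra).
    change (b * b ^ S k < a * a ^ S k). nra. }
lra.
Qed.

Lemma kst_real (N E Y Z C h x : R) :
  0 <= N -> 0 <= E -> 0 <= Y -> 0 <= Z -> 0 <= h -> 0 <= x ->
  (N = 0 \/ 1 <= N) -> N <= h * h ->
  E * E <= N * (Y + E) -> Y * Y <= N * N * (Z + Y) -> Z <= 8 * C ->
  64 * C <= x ^ 4 ->
  E <= N * (2 * h + x).
Proof.
intros hN hE hY hZ hh hx hN01 hNh h1 h2 hZC hx4.
destruct (Rle_lt_dec E (N * (2 * h + x))) as [|Hc]; auto. exfalso.
destruct hN01 as [N0|N1].
- subst N. nra.
- assert (hh1 : 1 <= h) by nra.
  assert (hE2 : 2 * N <= E) by nra.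
  assert (hNE : 2 * N * E <= E * E) by (apply Rmult_le_compat_r; lra).
  assert (hNY : E * E <= 2 * (N * Y)) by lra.
  assert (hE4N : 4 * (N * N * N) < E * E).
  { assert (2 * N * h < E) by nra.
    assert (0 <= 2 * N * h) by nra.
    assert ((2 * N * h) * (2 * N * h) < E * E) by (apply Rmult_le_0_lt_compat; lra).
    assert (N <= h * h) by lra.
    assert (N * (N * N) <= (h * h) * (N * N)) by (apply Rmult_le_compat_r; nra).
    nra. }
  assert (hY2 : 2 * (N * N) < Y) by nra.
  assert (hZY : Y * Y <= 2 * (N * N * Z)) by nra.
  assert (hE4 : E * E * (E * E) <= 4 * (N * N) * (Y * Y)).
  { assert (E * E <= 2 * N * Y) by nra.
    assert (0 <= E * E) by nra.
    assert (E * E * (E * E) <= (2 * N * Y) * (2 * N * Y)) by nra.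
    nra. }
  assert (hfin : E ^ 4 <= (N * x) ^ 4).
  { assert (E * E * (E * E) <= 8 * (N * N) * (N * N) * Z) by nra.
    assert (8 * (N * N) * (N * N) * Z <= (N * N) * (N * N) * (64 * C)).
    { assert (0 <= N * N * (N * N)) by nra. nra. }
    assert ((N * N) * (N * N) * (64 * C) <= (N * N) * (N * N) * x ^ 4).
    { assert (0 <= N * N * (N * N)) by nra. nra. }
    replace (E ^ 4) with (E * E * (E * E)) by ring.
    replace ((N * x) ^ 4) with ((N * N) * (N * N) * x ^ 4) by ring.
    lra. }
  apply pow_le_inv in hfin; try nra.
Qed.

Lemma INR_add (a b : nat) : INR (a + b)%N = INR a + INR b.
Proof. by rewrite -plusE plus_INR. Qed.
Lemma INR_mul (a b : nat) : INR (a * b)%N = INR a * INR b.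
Proof. by rewrite -multE mult_INR. Qed.
Lemma INR_exp (a k : nat) : INR (a ^ k)%N = INR a ^ k.
Proof. by rewrite -powE pow_INR. Qed.
Lemma INR_leq (a b : nat) : (a <= b)%N -> INR a <= INR b.
Proof. by move=> h; apply: le_INR; apply/leP. Qed.

Lemma sum_real (n : nat) (F G : nat -> nat) (c : R) :
  (forall t, (t < n)%N -> INR (F t) <= INR (G t) * c) ->
  INR (\sum_(t < n) F t) <= INR (\sum_(t < n) G t) * c.
Proof.
elim: n => [|n IH] h.
  rewrite !big_ord0 /=; lra.
rewrite !big_ord_recr /= !INR_add.
have h1 := IH (fun t ht => h t (ltnW ht)).
have h2 := h n (ltnSn n).
rewrite Rmult_plus_distr_r; exact: Rplus_le_compat h1 h2.
Qed.

Lemma INR8 : INR 8 = 8. Proof. simpl; ring. Qed.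
Lemma INR2 : INR 2 = 2. Proof. simpl; ring. Qed.

Theorem theorem2 (T : finType) (e : rel T) (o : rel T) :
  simple_graph e ->
  degree_orientation e o ->
  let n := #|T| in
  let m := nedges e in
  let P := INR (P_count e o) in
  (P > 100 * Rpower (INR m) (4 / 3) * (log2 (INR n)) ^ 2)%R ->
  (INR (ncycles4 e) >= P / (100 * (log2 (INR n)) ^ 2))%R.
Proof.
move=> sg dor n m P hP.
set C := INR (ncycles4 e).
set k := #|Hs e|.
set h := sqrt (INR k).
set x := sqrt (sqrt (64 * C)).
have hC0 : 0 <= C by apply: pos_INR.
have hx0 : 0 <= x by apply: sqrt_pos.
have hx4 : x ^ 4 = 64 * C.
  have e1 : x * x = sqrt (64 * C) by apply: sqrt_sqrt; apply: sqrt_pos.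
  have e2 : sqrt (64 * C) * sqrt (64 * C) = 64 * C by apply: sqrt_sqrt; lra.
  by rewrite -e2 -e1; ring.
have hh0 : 0 <= h by apply: sqrt_pos.
have hhk : h * h = INR k by apply: sqrt_sqrt; apply: pos_INR.
have ht : forall t, (t < n)%N -> INR (Esum o (Vt e t)) <= INR #|Vt e t| * (2 * h + x).
  move=> t _.
  apply: (kst_real (Y := INR (Ysum o (Vt e t))) (Z := INR (Zsum o (Vt e t))) (C := C)).
  - exact: pos_INR.
  - exact: pos_INR.
  - exact: pos_INR.
  - exact: pos_INR.
  - exact: hh0.
  - exact: hx0.
  - case: (posnP #|Vt e t|) => [->|hp]; [by left | right].
    by have := INR_leq hp.
  - by rewrite hhk; apply: INR_leq; apply: Vt_le_H.
  - have := INR_leq (kst1 o (Vt e t)); rewrite INR_exp INR_mul INR_add => H.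
    lra.
  - have := INR_leq (kst2 o (Vt e t)); rewrite INR_mul INR_add !INR_exp => H.
    lra.
  - by have := INR_leq (Z_le sg dor (Vt e t)); rewrite INR_mul INR8.
  - by rewrite hx4; lra.
have hsum : P <= INR (\sum_(t < n) #|Vt e t|) * (2 * h + x).
  apply: Rle_trans (sum_real ht); exact: INR_leq (A_bound sg dor).
have hB : INR (\sum_(t < n) #|Vt e t|) <= 2 * INR m.
  by have := INR_leq (B_bound sg); rewrite INR_mul INR2.
have hP2 : P <= 2 * INR m * (2 * h + x).
  apply: Rle_trans hsum _; apply: Rmult_le_compat_r; lra.
have hk3 : INR k ^ 3 <= 8 * INR m ^ 2.
  by have := INR_leq (H_bound sg); rewrite INR_mul !INR_exp INR8.
set M := Rpower (INR m) (4 / 3).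
set L := log2 (INR n) ^ 2.
have {}hP : P > 100 * M * L := hP.
have hM0 : 0 < M by rewrite /M /Rpower; apply: exp_pos.
have hL0 : 0 <= L by rewrite /L; apply: pow2_ge_0.
have hPpos : 0 < P.
  have : 0 <= 100 * M * L by apply: Rmult_le_pos; lra.
  lra.
have hm : (0 < m)%N.
  case: (posnP m) => // hm0.
  have : INR m = 0 by rewrite hm0.
  move=> hm0'; rewrite hm0' in hP2; lra.
have hmR : 0 < INR m by apply: lt_0_INR; apply/ltP.
have hn : (2 <= n)%N.
  move: hm; rewrite /m /nedges => /card_gt0P[E]; rewrite inE.
  case/existsP=> u /existsP[v /andP[euv _]].
  have := max_card (mem [set u; v]); rewrite cards2 (e_neq sg euv).
  by [].
have hL1 : 1 <= L.
  have hl2 : 0 < ln 2 by rewrite -ln_1; apply: ln_increasing; lra.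
  have hn2 : 2 <= INR n by rewrite -INR2; apply: INR_leq.
  have hln : ln 2 <= ln (INR n).
    case: (Rle_lt_or_eq_dec _ _ hn2) => [hlt|<-]; last by lra.
    by apply: Rlt_le; apply: ln_increasing; lra.
  have hlog : 1 <= log2 (INR n).
    rewrite /log2; apply: (Rmult_le_reg_r (ln 2)) => //.
    rewrite /Rdiv Rmult_assoc Rinv_l; lra.
  rewrite /L; nra.
have hM3 : M ^ 3 = INR m ^ 4.
  rewrite -(@Rpower_pow 3 M hM0) /M Rpower_mult.
  have -> : 4 / 3 * INR 3 = INR 4 by simpl; field.
  by apply: Rpower_pow.
have h6 : 4 * INR m * h <= 6 * M.
  apply: (@pow_le_inv _ _ 5).
  - have : 0 <= INR m * h by apply: Rmult_le_pos; lra.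
    lra.
  - lra.
  have -> : (4 * INR m * h) ^ 6 = 4096 * INR m ^ 6 * (h * h) ^ 3 by ring.
  have -> : (6 * M) ^ 6 = 46656 * (M ^ 3) ^ 2 by ring.
  rewrite hhk hM3.
  have hm6 : 0 <= INR m ^ 6 by apply: pow_le; lra.
  have : INR m ^ 6 * INR k ^ 3 <= INR m ^ 6 * (8 * INR m ^ 2).
    by apply: Rmult_le_compat_l.
  have -> : (INR m ^ 4) ^ 2 = INR m ^ 6 * INR m ^ 2 by ring.
  nra.
have h4mx : P <= 4 * INR m * x.
  have : 100 * M <= 100 * M * L by nra.
  nra.
have hP4 : P ^ 4 <= 16384 * INR m ^ 4 * C.
  have : P ^ 4 <= (4 * INR m * x) ^ 4 by apply: pow_incr; lra.
  have -> : (4 * INR m * x) ^ 4 = 256 * INR m ^ 4 * x ^ 4 by ring.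
  rewrite hx4; lra.
have hP3 : 1000000 * INR m ^ 4 * L ^ 3 <= P ^ 3.
  have : (100 * M * L) ^ 3 <= P ^ 3.
    apply: pow_incr; split; last lra.
    apply: Rmult_le_pos; lra.
  have -> : (100 * M * L) ^ 3 = 1000000 * M ^ 3 * L ^ 3 by ring.
  by rewrite hM3.
have hL3 : 1 <= L ^ 3.
  have : 1 ^ 3 <= L ^ 3 by apply: pow_incr; lra.
  by rewrite pow1.
have hm4 : 0 < INR m ^ 4 by apply: pow_lt.
have hfin : 1000000 * P <= 16384 * C.
  have h1 : P * (1000000 * INR m ^ 4 * L ^ 3) <= P * P ^ 3.
    by apply: Rmult_le_compat_l; lra.
  have h2 : P * P ^ 3 = P ^ 4 by ring.
  have h3 : P * (1000000 * INR m ^ 4) <= P * (1000000 * INR m ^ 4 * L ^ 3).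
    apply: Rmult_le_compat_l; first lra.
    have := Rmult_le_compat_l (1000000 * INR m ^ 4) 1 (L ^ 3) ltac:(lra) hL3.
    lra.
  have h4 : INR m ^ 4 * (1000000 * P) <= INR m ^ 4 * (16384 * C).
    have -> : INR m ^ 4 * (1000000 * P) = P * (1000000 * INR m ^ 4) by ring.
    lra.
  by apply: (Rmult_le_reg_l (INR m ^ 4)).
apply: Rle_ge.
have hd : 0 < 100 * L by lra.
apply: (Rmult_le_reg_r (100 * L)) => //.
rewrite /Rdiv Rmult_assoc Rinv_l; last lra.
nra.
Qed.
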